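(* Let $q>0$ and $r\ge 0$ be real numbers. For every integer $n\ge 0$, $$B_n^q(r)=\sum_{k=0}^{n}(-1)^k\,\frac{k!}{k+1}\,W(n,k),$$ where $B_n^q(r)$ and $W(n,k)=W_{q,r}(n,k)$ are as defined in the context.
   Context: The Bernoulli polynomials with a $q$ parameter $B_n^q(r)$ are defined by the formal power series identity in $t$ $$\sum_{n=0}^{\infty}B_n^q(r)\frac{t^n}{n!}=\frac{q\,e^{rt}}{1-e^{qt}}\sum_{k=1}^{\infty}\left(\frac{1-e^{qt}}{q}\right)^k\frac{1}{k}.$$ The $r$-Whitney numbers of the second kind $W(n,k)=W_{q,r}(n,k)$, $0\le k\le n$, are defined by the polynomial identity in $x$: $(qx+r)^n=\sum_{k=0}^n q^k\,W(n,k)\,(x)_k$, where $(x)_k=x(x-1)\cdots(x-k+1)$ is the falling factorial (with $(x)_0=1$). Equivalently, $\sum_{n\ge k}W(n,k)\frac{t^n}{n!}=\frac{e^{rt}}{k!}\left(\frac{e^{qt}-1}{q}\right)^k$. *)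

(* Defs.v *)
(* Formal power series over a field R are represented by
   their coefficient sequences nat -> R. *)
From HB Require Import structures.
From mathcomp Require Import all_boot all_order all_algebra.
Set Implicit Arguments. Unset Strict Implicit. Unset Printing Implicit Defensive.
Import Order.TTheory GRing.Theory Num.Theory.
Local Open Scope ring_scope.

Section FPS.
Variable R : fieldType.

Definition fps_mul (f g : nat -> R) : nat -> R :=
  fun n => \sum_(i < n.+1) f i * g (n - i)%N.

Definition fps_one : nat -> R := fun n => (n == 0%N)%:R.

Definition fps_pow (f : nat -> R) (k : nat) : nat -> R := iter k (fps_mul f) fps_one.

Definition fps_exp (a : R) : nat -> R := fun n => a ^+ n / (n`!)%:R.

Definition fps_u (q : R) : nat -> R := fun n => (fps_one n - fps_exp q n) / q.

(* L(t) = sum_{k>=1} u(t)^k / k ; since u has zero constant term the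
   coefficient of t^n only involves k <= n. *)
Definition fps_L (q : R) : nat -> R :=
  fun n => \sum_(1 <= k < n.+1) fps_pow (fps_u q) k n / k%:R.

Definition egf (B : nat -> R) : nat -> R := fun n => B n / (n`!)%:R.

(* The defining identity of the Bernoulli polynomials with parameter q:
     sum B_n t^n/n! = q e^{rt} / (1 - e^{qt}) * L(t),
   stated after clearing the (non-zero-divisor) denominator:
     (1 - e^{qt}) * sum B_n t^n/n! = q e^{rt} * L(t). *)
Definition is_qBernoulli (q r : R) (B : nat -> R) : Prop :=
  forall n, fps_mul (fun m => fps_one m - fps_exp q m) (egf B) n
            = q * fps_mul (fps_exp r) (fps_L q) n.

Definition falling (k : nat) : {poly R} := \prod_(i < k) ('X - (i%:R)%:P).

Definition is_rWhitney2 (q r : R) (W : nat -> nat -> R) : Prop :=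
  forall n, (q *: 'X + r%:P) ^+ n = \sum_(k < n.+1) (q ^+ k * W n k) *: falling k.

End FPS.

(* Main.v *)
Require Import Defs.
From HB Require Import structures.
From mathcomp Require Import all_boot all_order all_algebra.
From mathcomp Require Import ring zify.
Import Order.TTheory GRing.Theory Num.Theory.
Local Open Scope ring_scope.

Lemma binffact i d l : (l <= d)%N ->
  ('C(i + d, i + l) * (i + l) ^_ i = (i + d) ^_ i * 'C(d, l))%N.
Proof.
move=> hl.
apply/eqP; rewrite -(eqn_pmul2r (fact_gt0 l)) -(eqn_pmul2r (fact_gt0 (d - l))).
have e1 := ffact_fact (leq_addr l i); rewrite addKn in e1.
have e2 := @bin_fact (i + d) (i + l); rewrite subnDl leq_add2l in e2.
have e3 := ffact_fact (leq_addr d i); rewrite addKn in e3.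
have e4 := bin_fact hl.
rewrite -(mulnA _ 'C(d, l)) -(mulnA _ ('C(d, l) * _)) -(mulnA 'C(d, l)) e4 e3.
by rewrite -(mulnA _ ((i + l) ^_ i)) e1 -mulnA (e2 hl).
Qed.

Section Comb.
Variable R : realFieldType.

Lemma altbin d : \sum_(l < d.+1) (-1) ^+ l * ('C(d, l))%:R = (d == 0)%:R :> R.
Proof.
have := exprD1n (-1 : R) d; rewrite addNr expr0n => ->.
by apply: eq_bigr => i _; rewrite mulr_natr.
Qed.

Lemma Sprime k i :
  \sum_(j < k.+1) (-1) ^+ j * ('C(k, j))%:R * ((j ^_ i)%N)%:R
  = (i == k)%:R * ((-1) ^+ k * (k`!)%:R) :> R.
Proof.
case: (ltnP k i) => hki.
  rewrite big1 ?(gtn_eqF hki) ?mul0r // => j _.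
  by rewrite ffact_small ?mulr0 // (leq_ltn_trans _ hki) // -ltnS.
move: (subnKC hki) => hk; rewrite -hk; move: (k - i)%N => d; clear hk hki.
rewrite -addnS big_split_ord /= big1 ?add0r; last first.
  by move=> j _; rewrite /= ffact_small ?mulr0.
rewrite (eq_bigr (fun l : 'I_d.+1 => (-1) ^+ i * ((i + d) ^_ i)%:R *
           ((-1) ^+ l * ('C(d, l))%:R))); last first.
  move=> l _ /=; idtac.
  rewrite exprD -mulrA -natrM binffact; last by rewrite -ltnS. 
  rewrite natrM; ring.
rewrite -mulr_sumr altbin.
case: d => [|d]; first by rewrite addn0 eqxx ffactnn; ring.
rewrite /= mulr0 -{1}(addn0 i) eqn_add2l /=. ring.
Qed.


Lemma falling_eval j i : (falling R i).[j%:R] = ((j ^_ i)%N)%:R.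
Proof.
rewrite /falling horner_prod ffact_prod natr_prod.
case: (leqP i j) => hij.
  apply: eq_bigr => l _; rewrite hornerD hornerN hornerX hornerC natrB //.
  by apply: ltnW; apply: leq_trans (ltn_ord l) hij.
rewrite [LHS](bigD1 (Ordinal hij)) //= [RHS](bigD1 (Ordinal hij)) //=.
by rewrite subnn hornerD hornerN hornerX hornerC subrr !mul0r.
Qed.

Lemma Wform (q r : R) (W : nat -> nat -> R) (hW : is_rWhitney2 q r W) n k :
  (k <= n)%N ->
  q ^+ k * W n k * ((-1) ^+ k * (k`!)%:R) =
  \sum_(j < k.+1) (-1) ^+ j * ('C(k, j))%:R * (r + j%:R * q) ^+ n.
Proof.
move=> hkn.
have ev j : (r + j%:R * q) ^+ n =
    \sum_(i < n.+1) q ^+ i * W n i * ((j ^_ i)%N)%:R.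
  have := congr1 (horner^~ (j%:R : R)) (hW n).
  rewrite !hornerE horner_sum => H.
  have -> : r + j%:R * q = q * j%:R + r by ring.
  rewrite H.
  by apply: eq_bigr => i _; rewrite hornerZ falling_eval.
rewrite (eq_bigr (fun j : 'I_k.+1 => \sum_(i < n.+1)
     q ^+ i * W n i * ((-1) ^+ j * ('C(k, j))%:R * ((j ^_ i)%N)%:R))); last first.
  move=> j _; rewrite ev mulr_sumr; apply: eq_bigr => i _; ring.
rewrite exchange_big /=.
rewrite (bigD1 (Ordinal (hkn : (k < n.+1)%N))) //= -mulr_sumr Sprime eqxx mul1r.
rewrite big1 ?addr0 // => i /negbTE hi.
rewrite -mulr_sumr Sprime.
have -> : (i == k :> nat) = false by move: hi; rewrite -val_eqE.
by rewrite mul0r mulr0.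
Qed.

End Comb.

Section FPSpoly.
Variable R : realFieldType.
Local Set Implicit Arguments.
Variable N : nat.

Definition eqN (p p' : {poly R}) := forall m, (m < N)%N -> p`_m = p'`_m.

Lemma eqN_refl p : eqN p p. Proof. by []. Qed.
Lemma eqN_sym p p' : eqN p p' -> eqN p' p. Proof. by move=> h m hm; rewrite h. Qed.
Lemma eqN_trans p1 p2 p3 : eqN p1 p2 -> eqN p2 p3 -> eqN p1 p3.
Proof. by move=> h1 h2 m hm; rewrite h1 ?h2. Qed.

Lemma mulC (f g : nat -> R) (p p' : {poly R}) m :
  (forall i, (i < N)%N -> p`_i = f i) -> (forall i, (i < N)%N -> p'`_i = g i) ->
  (m < N)%N -> fps_mul f g m = (p * p')`_m.
Proof.
move=> hp hp' hm; rewrite coefM /fps_mul; apply: eq_bigr => i _.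
have hi : (i < N)%N by apply: leq_ltn_trans hm; rewrite -ltnS.
have hmi : (m - i < N)%N by apply: leq_ltn_trans hm; apply: leq_subr.
by rewrite hp // hp'.
Qed.

Lemma powC (f : nat -> R) (p : {poly R}) k m :
  (forall i, (i < N)%N -> p`_i = f i) ->
  (m < N)%N -> fps_pow f k m = (p ^+ k)`_m.
Proof.
move=> hp; elim: k m => [|k IH] m hm; first by rewrite expr0 coef1.
rewrite exprS /fps_pow iterS -/(fps_pow f k); apply: mulC => // i hi.
by rewrite IH.
Qed.

Lemma eqN_mul p p' s s' : eqN p p' -> eqN s s' -> eqN (p * s) (p' * s').
Proof.
move=> h1 h2 m hm; rewrite -(@mulC (fun i => p'`_i) (fun i => s'`_i)) //.
by rewrite -(@mulC (fun i => p'`_i) (fun i => s'`_i)).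
Qed.

Lemma eqN_exp p p' k : eqN p p' -> eqN (p ^+ k) (p' ^+ k).
Proof.
move=> h; elim: k => [|k IH]; first exact: eqN_refl.
by rewrite !exprS; apply: eqN_mul.
Qed.

Lemma eqN_scale c p p' : eqN p p' -> eqN (c *: p) (c *: p').
Proof. by move=> h m hm; rewrite !coefZ h. Qed.

Definition E (a : R) : {poly R} := \poly_(i < N) fps_exp a i.

Lemma coefE a m : (m < N)%N -> (E a)`_m = a ^+ m / (m`!)%:R.
Proof. by move=> hm; rewrite coef_poly hm. Qed.

Lemma fact_neq0 m : (m`!)%:R != 0 :> R.
Proof. by rewrite pnatr_eq0 -lt0n fact_gt0. Qed.

Lemma E_mul a b : eqN (E a * E b) (E (a + b)).
Proof.
move=> m hm; rewrite coefM coefE // addrC exprDn mulr_suml.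
apply: eq_bigr => i _.
have hi : (i < N)%N by apply: leq_ltn_trans hm; rewrite -ltnS.
have hmi : (m - i < N)%N by apply: leq_ltn_trans hm; apply: leq_subr.
rewrite !coefE //.
have hC := bin_fact (ltn_ord i : (i <= m)%N).
have hC' : ('C(m, i))%:R = (m`!)%:R / ((i`!)%:R * ((m - i)`!)%:R) :> R.
  by rewrite -hC !natrM mulfK // mulf_neq0 // fact_neq0.
rewrite -(mulr_natr (b ^+ (m - i) * a ^+ i)) hC'.
have := fact_neq0 m; have := fact_neq0 i; have := fact_neq0 (m - i).
move=> h1 h2 h3; field.
by rewrite h1 h2 h3.
Qed.


Lemma E0 : eqN (E 0) 1.
Proof.
move=> m hm; rewrite coefE // coef1 expr0n; case: m hm => [|m] _ /=.
  by rewrite divr1.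
by rewrite mul0r.
Qed.

Lemma eqN_E a b : a = b -> eqN (E a) (E b). Proof. by move=> ->. Qed.

Lemma E_pow a j : eqN (E a ^+ j) (E (j%:R * a)).
Proof.
elim: j => [|j IH]; first by rewrite expr0 mul0r; apply: eqN_sym; exact: E0.
rewrite exprS; apply: eqN_trans (eqN_mul (eqN_refl (E a)) IH) _.
apply: eqN_trans (E_mul _ _) _; apply: eqN_E.
by rewrite mulrSr mulrDl mul1r addrC.
Qed.

Lemma pow_low (p : {poly R}) k j : p`_0 = 0 -> (j < k)%N -> (p ^+ k)`_j = 0.
Proof.
move=> p0; elim: k j => [|k IH] j //= hj.
rewrite exprS coefM big_ord_recl p0 mul0r add0r big1 // => i _.
by rewrite IH ?mulr0 //=; have := ltn_ord i; rewrite /bump /=; lia.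
Qed.

Lemma mulpow_low (s p : {poly R}) k j : p`_0 = 0 -> (j < k)%N -> (s * p ^+ k)`_j = 0.
Proof.
move=> p0 hj; rewrite coefM big1 // => i _.
by rewrite pow_low ?mulr0 //; have := ltn_ord i; lia.
Qed.

Variables q r : R.
Hypothesis hq : q != 0.

Definition Up : {poly R} := \poly_(i < N) fps_u q i.

Lemma Up_eq : eqN (q *: Up) (1 - E q).
Proof.
move=> m hm; rewrite coefZ coef_poly hm coefB coef1 coefE // /fps_u /fps_exp /fps_one.
by rewrite mulrC divfK.
Qed.

Lemma Up0 : Up`_0 = 0.
Proof.
rewrite coef_poly; case: ifP => // _.
by rewrite /fps_u /fps_one /fps_exp /= expr0 divr1 subrr mul0r.
Qed.

Lemma ErUk k m : (m < N)%N ->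
  (E r * Up ^+ k)`_m = q ^- k *
    \sum_(j < k.+1) (-1) ^+ j * ('C(k, j))%:R * ((r + j%:R * q) ^+ m / (m`!)%:R).
Proof.
move=> hm.
have h1 : eqN Up (q^-1 *: (1 - E q)).
  by move=> i hi; rewrite coefZ -Up_eq // coefZ mulrA mulVf // mul1r.
have h2 := eqN_mul (eqN_refl (E r)) (eqN_exp k h1).
rewrite h2 // exprZn exprBn. rewrite -scalerAr coefZ exprVn; congr (_ * _).
rewrite mulr_sumr coef_sum; apply: eq_bigr => j _.
rewrite expr1n mulr1 (mulrnAr (E r)) coefMn mulrCA.
have -> : (-1) ^+ j * (E r * E q ^+ j) = ((-1) ^+ j) *: (E r * E q ^+ j).
  by rewrite -mul_polyC rmorphXn rmorphN1.
rewrite coefZ.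
have h3 := eqN_trans (eqN_mul (eqN_refl (E r)) (E_pow q j)) (E_mul _ _).
by rewrite h3 // coefE // -mulr_natr; ring.
Qed.


Definition S1 : {poly R} := \sum_(k < N) (k.+1)%:R^-1 *: Up ^+ k.

Lemma Lp_eq m : (m < N)%N -> (Up * S1)`_m = fps_L q m.
Proof.
move=> hm; rewrite /fps_L /S1 mulr_sumr coef_sum.
rewrite (eq_bigr (fun k : 'I_N => (Up ^+ k.+1)`_m / (k.+1)%:R)); last first.
  by move=> k _; rewrite -scalerAr coefZ -exprS mulrC.
rewrite -(big_mkord xpredT (fun k => (Up ^+ k.+1)`_m / (k.+1)%:R)).
rewrite big_add1 /=.
rewrite (big_cat_nat (n:=m)) /=; [|by []|exact: ltnW].
rewrite [X in _ + X]big_nat_cond [X in _ + X]big1 ?addr0; last first.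
  by move=> k /andP[/andP[hk _] _]; rewrite pow_low ?mul0r ?Up0 // ltnS.
apply: eq_bigr => k _.
have h : forall i, (i < N)%N -> Up`_i = fps_u q i by move=> i hi; rewrite coef_poly hi.
by rewrite -(@powC (fps_u q) Up k.+1 m h hm).
Qed.

End FPSpoly.

Section Uniq.
Variable R : realFieldType.
Lemma uniq_fps (a x y : nat -> R) M : a 0%N = 0 -> a 1%N != 0 ->
  (forall m, (m <= M.+1)%N -> fps_mul a x m = fps_mul a y m) ->
  forall m, (m <= M)%N -> x m = y m.
Proof.
move=> a0 a1 e; elim/ltn_ind => m IH hm.
have := e m.+1 hm; rewrite /fps_mul !big_ord_recl a0 !mul0r !add0r.
rewrite [X in _ + X = _](eq_bigr (fun i : 'I_m =>
   a (lift ord0 (lift ord0 i)) * y (m.+1 - lift ord0 (lift ord0 i))%N)); last first.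
  move=> i _; rewrite IH //= /bump /=; first by have := ltn_ord i; lia.
  by apply: leq_trans hm; lia.
move/addIr; rewrite /= subSS subn0 => /mulfI; exact.
Qed.
End Uniq.

Theorem mainTheorem1 (R : realFieldType) (q r : R) (hq : 0 < q) (hr : 0 <= r)
  (B : nat -> R) (W : nat -> nat -> R)
  (hB : is_qBernoulli q r B) (hW : is_rWhitney2 q r W) (n : nat) :
  B n = \sum_(k < n.+1) (-1) ^+ k * ((k`!)%:R / (k.+1)%:R) * W n k.
Proof.
have hq0 : q != 0 by rewrite (gt_eqF hq).
pose N := n.+2.
pose G := E R N r * S1 R N q.
pose a := fun m => fps_one R m - fps_exp q m.
have a0 : a 0%N = 0 by rewrite /a /fps_one /fps_exp /= expr0 divr1 subrr.
have a1 : a 1%N != 0.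
  by rewrite /a /fps_one /fps_exp /= expr1 divr1 sub0r oppr_eq0.
have key : forall m, (m <= n.+1)%N -> fps_mul a (egf B) m = fps_mul a (fun i => G`_i) m.
  move=> m hm; have hmN : (m < N)%N by [].
  rewrite hB.
  rewrite (@mulC R N a (fun i => G`_i) (1 - E R N q) G m) //; last first.
    by move=> i hi; rewrite coefB coef1 coef_poly hi.
  rewrite (@mulC R N (fps_exp r) (fps_L q) (E R N r) (Up R N q * S1 R N q) m) //; last first.
  - by move=> i hi; rewrite (Lp_eq R N q).
  - by move=> i hi; rewrite coef_poly hi.
  have h := eqN_mul (eqN_sym (Up_eq R N q hq0)) (@eqN_refl R N G).
  rewrite h // -scalerAl coefZ /G mulrCA //.
have hu := @uniq_fps R _ _ _ n a0 a1 key n (leqnn n).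
rewrite -(divfK (fact_neq0 R n) (B n)) -/(egf B n) hu /G /S1.
rewrite mulr_sumr coef_sum big_ord_recr /=.
rewrite -scalerAr coefZ mulpow_low ?(Up0 R N q) // mulr0 addr0 mulr_suml.
apply: eq_bigr => k _.
rewrite -scalerAr coefZ (ErUk R N q r hq0) //.
rewrite (eq_bigr (fun j : 'I_k.+1 =>
   ((-1) ^+ j * ('C(k, j))%:R * (r + j%:R * q) ^+ n) / (n`!)%:R)); last first.
  by move=> j _; rewrite mulrA.
rewrite -mulr_suml -(Wform R q r W hW) //; last by have := ltn_ord k; lia.
have := fact_neq0 R n; have : (k.+1)%:R != 0 :> R by rewrite pnatr_eq0.
move=> h1 h2; field.
by rewrite addrC natr1 h1 h2 expf_neq0.
Qed.
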